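(* For $n\ge1$ and $k\in[n]$, let $a_{n,k}$ be the number of permutations $\pi\in\mathcal S_n$ avoiding $(123,\{0,2\},\emptyset)$ with $\pi_1=k$. Then \[a_{n,k}=\begin{cases}(k-1)!\,k^{\,n-k}&\text{for }k=1,2,\dots,n-2,\\ (n-1)!&\text{if }k=n-1\text{ or }k=n.\end{cases}\]
   Context: For $n\ge1$, $\mathcal S_n$ is the set of permutations $\pi=\pi_1\cdots\pi_n$ of $[n]$. A bi-vincular pattern of length $k$ is a triple $p=(\sigma,X,Y)$ with $\sigma\in\mathcal S_k$ and $X,Y\subseteq\{0,1,\dots,k\}$. A permutation $\pi\in\mathcal S_n$ contains $p$ if there are indices $1\le i_1<\dots<i_k\le n$ such that $(\pi_{i_1},\dots,\pi_{i_k})$ is order-isomorphic to $\sigma$ and, letting $j_1<\dots<j_k$ be the values $\pi_{i_1},\dots,\pi_{i_k}$ sorted increasingly and setting $i_0=j_0=0$, $i_{k+1}=j_{k+1}=n+1$, one has $i_{x+1}=i_x+1$ for all $x\in X$ and $j_{y+1}=j_y+1$ for all $y\in Y$. Otherwise $\pi$ avoids $p$. *)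

(* Defs.v *)
From mathcomp Require Import all_boot all_fingroup.
Set Implicit Arguments. Unset Strict Implicit. Unset Printing Implicit Defensive.

(* Conventions: a permutation pi : 'S_n maps 0-based positions to 0-based
   values; the paper's pi_i (1-based) is (pi (i-1)).+1.  An occurrence is
   given by a strictly increasing f : 'I_k -> 'I_n (0-based positions
   i_1 < ... < i_k).  We build the paper's lists
     i_0 = 0, i_1, ..., i_k, i_{k+1} = n+1   (1-based positions)
     j_0 = 0, j_1 < ... < j_k, j_{k+1} = n+1 (1-based sorted values). *)

Definition occ_positions n k (f : {ffun 'I_k -> 'I_n}) : seq nat :=
  0 :: [seq (f a).+1 | a <- enum 'I_k] ++ [:: n.+1].

Definition occ_values n k (pi : 'S_n) (f : {ffun 'I_k -> 'I_n}) : seq nat :=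
  0 :: sort leq [seq (pi (f a)).+1 | a <- enum 'I_k] ++ [:: n.+1].

Definition bv_contains n k (sigma : 'S_k) (X Y : {set 'I_k.+1}) (pi : 'S_n) : bool :=
  [exists f : {ffun 'I_k -> 'I_n},
    [&& [forall a : 'I_k, forall b : 'I_k, (a < b) ==> (f a < f b)],
        [forall a : 'I_k, forall b : 'I_k,
            (sigma a < sigma b) == (pi (f a) < pi (f b))],
        [forall x in X, nth 0 (occ_positions f) x.+1 == (nth 0 (occ_positions f) x).+1]
      & [forall y in Y, nth 0 (occ_values pi f) y.+1 == (nth 0 (occ_values pi f) y).+1]]].

Definition bv_avoids n k (sigma : 'S_k) (X Y : {set 'I_k.+1}) (pi : 'S_n) : bool :=
  ~~ bv_contains sigma X Y pi.

Definition pat123 : 'S_3 := 1%g.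
Definition X02 : {set 'I_4} := [set (@Ordinal 4 0 isT); (@Ordinal 4 2 isT)].
Definition Y0 : {set 'I_4} := set0.

Definition a_nk (n k : nat) : nat :=
  #|[set pi : 'S_n | bv_avoids pat123 X02 Y0 pi &&
      [exists i : 'I_n, (val i == 0) && ((pi i).+1 == k)]]|.

(* Main.v *)
Require Import Defs.
From mathcomp Require Import all_boot all_fingroup.
Set Implicit Arguments. Unset Strict Implicit. Unset Printing Implicit Defensive.

Definition okp (c y : nat) (t : seq nat) : bool :=
  if t is z :: _ then ~~ ((c < y) && (y < z)) else true.

Fixpoint gt (c : nat) (t : seq nat) : bool :=
  if t is y :: t' then okp c y t' && gt c t' else true.

Definition gd (s : seq nat) : bool := if s is c :: t then gt c t else true.

Fixpoint ins (x m : nat) (t : seq nat) : seq nat :=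
  if t is y :: t' then (if y == x then y :: m :: t' else y :: ins x m t') else [::].

Lemma gt_big c m t : all (fun y => y < m) t -> gt c (m :: t) = gt c t.
Proof.
case: t => [|y t] //= /andP[ym _].
by rewrite /okp [m < y]ltnNge (ltnW ym) andbF.
Qed.

Lemma gt_small c y t : y <= c -> gt c (y :: t) = gt c t.
Proof. by case: t => [|z t] //= yc; rewrite ltnNge yc. Qed.

Lemma okp_ins c y x m t : okp c y (ins x m t) = okp c y t.
Proof. by case: t => [|z t] //=; case: ifP. Qed.

Lemma gt_ins c x m t : x <= c -> all (fun y => y < m) t -> gt c (ins x m t) = gt c t.
Proof.
move=> xc; elim: t => [|y t IH] //= /andP[ym At].
case: ifP => [/eqP yx|_].
  have yc : y <= c by rewrite yx.
  have E1 := @gt_small c y (m :: t) yc; have E2 := @gt_small c y t yc.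
  by move: E1 E2 => /= -> ->; rewrite -/(gt c (m :: t)) gt_big.
by rewrite /= okp_ins IH.
Qed.

Lemma gd_ins c x m t : x <= c -> all (fun y => y < m) t ->
  gd (ins x m (c :: t)) = gd (c :: t).
Proof.
move=> xc At; rewrite [ins _ _ _]/=; case: ifP => _ /=.
  by rewrite -/(gt c (m :: t)) gt_big.
by rewrite -/(gt c (ins x m t)) gt_ins.
Qed.

Lemma perm_ins x m t : x \in t -> perm_eq (ins x m t) (m :: t).
Proof.
elim: t => [|y t IH] //=; rewrite in_cons.
have sw : forall u, perm_eq (y :: m :: u) (m :: y :: u).
  by move=> u; apply/seq.permP => p /=; rewrite !addnA (addnC (p y)).
case: ifP => [_ _|/negbT yx /orP[/eqP xy|xt]]; first exact: sw.
  by rewrite xy eqxx in yx.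
by apply: perm_trans (sw t); rewrite perm_cons IH.
Qed.

Lemma ins_split p m a b : p \notin a -> ins p m (a ++ p :: b) = a ++ p :: m :: b.
Proof.
elim: a => [|y a IH] /=; first by rewrite eqxx.
by rewrite in_cons negb_or eq_sym => /andP[/negbTE -> /IH ->].
Qed.

Lemma filter_ins x m t : filter (predC1 m) (ins x m t) = filter (predC1 m) t.
Proof.
elim: t => [|y t IH] //=; case: ifP => _ /=; last by rewrite IH.
by rewrite eqxx.
Qed.

Lemma index_ins x m t : m \notin t -> x \in t -> index m (ins x m t) = (index x t).+1.
Proof.
elim: t => [|y t IH] //=; rewrite !in_cons negb_or => /andP[ym mt].
have ym' : (y == m) = false by apply/negbTE; rewrite eq_sym.
case: ifP => [/eqP yx|yx] /=.
  by move=> _; rewrite ym' eqxx.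
rewrite ym' => /orP[/eqP xy|xt]; first by rewrite xy eqxx in yx.
by rewrite IH.
Qed.

Lemma gt_bad c a p m b : gt c (a ++ p :: m :: b) -> ~~ ((c < p) && (p < m)).
Proof.
elim: a => [|y a IH] /=; first by case/andP.
by case/andP => _ /IH.
Qed.

Lemma gt_all_small c t : all (fun y => y <= c) t -> gt c t.
Proof.
elim: t => [|y t IH] //= /andP[yc At].
by rewrite IH // andbT /okp; case: t {IH At} => // z _; rewrite ltnNge yc.
Qed.

Definition Qk k (s : seq nat) := gd s && (head 0 s == k.-1).
Definition B n k := filter (Qk k) (permutations (iota 0 n)).

Lemma memB n k s : (s \in B n k) = Qk k s && perm_eq s (iota 0 n).
Proof. by rewrite mem_filter mem_permutations. Qed.

Lemma uniqB n k : uniq (B n k).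
Proof. exact/filter_uniq/permutations_uniq. Qed.

Lemma piotaS n s : perm_eq s (iota 0 n.+1) = perm_eq s (n :: iota 0 n).
Proof.
by rewrite -addn1 iotaD add0n cats1 [perm_eq s _]perm_sym perm_rcons perm_sym.
Qed.

Lemma perm_ins_iota n x t : x \in t ->
  perm_eq (ins x n t) (iota 0 n.+1) = perm_eq t (iota 0 n).
Proof. by move=> xt; rewrite piotaS (permPl (perm_ins n xt)) perm_cons. Qed.

Lemma mem_iota_perm n t y : perm_eq t (iota 0 n) -> (y \in t) = (y < n).
Proof. by move/perm_mem ->; rewrite mem_iota. Qed.

Lemma all_iota_perm n t : perm_eq t (iota 0 n) -> all (fun y => y < n) t.
Proof. by move=> P; apply/allP => y; rewrite (mem_iota_perm _ P). Qed.

Lemma head_ins x m c u : head 0 (ins x m (c :: u)) = c.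
Proof. by rewrite /=; case: ifP. Qed.

Lemma notin_cat (a b : seq nat) p : uniq (a ++ p :: b) -> p \notin a.
Proof.
rewrite cat_uniq => /and3P[_ /hasPn H _]; exact: (H p (mem_head _ _)).
Qed.

Lemma fromB n k c u x : 0 < k -> x \in c :: u -> x <= k.-1 ->
  ins x n (c :: u) \in B n.+1 k -> (c :: u) \in B n k.
Proof.
move=> k0 xt xc; rewrite !memB perm_ins_iota // => /andP[/andP[G H] P].
rewrite P andbT /Qk; rewrite head_ins in H; rewrite H andbT.
rewrite -(@gd_ins c x n u) ?G //; first by rewrite (eqP H).
by have /andP[] := all_iota_perm P.
Qed.

Lemma toB n k c u x : 0 < k -> x \in c :: u -> x <= k.-1 ->
  (c :: u) \in B n k -> ins x n (c :: u) \in B n.+1 k.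
Proof.
move=> k0 xt xc; rewrite !memB perm_ins_iota // => /andP[/andP[G H] P].
rewrite P andbT /Qk head_ins H andbT.
move: H => /= H.
rewrite (@gd_ins c x n u) ?G //; first by rewrite (eqP H).
by have /andP[] := all_iota_perm P.
Qed.

Lemma stepB n k : 0 < k <= n ->
  perm_eq (B n.+1 k) [seq ins x n t | t <- B n k, x <- iota 0 k].
Proof.
case/andP=> k0 kn.
have mB t : t \in B n k -> perm_eq t (iota 0 n) by rewrite memB => /andP[].
apply: uniq_perm; first exact: uniqB.
  apply: allpairs_uniq; [exact: uniqB | exact: iota_uniq |].
  move=> [t x] [t' x'] /allpairsP[[t1 x1] /= [Ht1 Hx1 [-> ->]]].
  move=> /allpairsP[[t2 x2] /= [Ht2 Hx2 [-> ->]]] /= E.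
  have Pt1 := mB _ Ht1; have Pt2 := mB _ Ht2.
  have nt1 : n \notin t1 by rewrite (mem_iota_perm _ Pt1) ltnn.
  have nt2 : n \notin t2 by rewrite (mem_iota_perm _ Pt2) ltnn.
  have et : t1 = t2.
    have := congr1 (filter (predC1 n)) E; rewrite !filter_ins.
    have f1 : filter (predC1 n) t1 = t1.
      by apply/all_filterP/allP => y yt /=; apply/eqP => yn; rewrite -yn yt in nt1.
    have f2 : filter (predC1 n) t2 = t2.
      by apply/all_filterP/allP => y yt /=; apply/eqP => yn; rewrite -yn yt in nt2.
    by rewrite f1 f2.
  subst t2.
  have x1t : x1 \in t1 by rewrite (mem_iota_perm _ Pt1); rewrite mem_iota in Hx1; apply: leq_trans kn.
  have x2t : x2 \in t1 by rewrite (mem_iota_perm _ Pt1); rewrite mem_iota in Hx2; apply: leq_trans kn.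
  have := congr1 (index n) E; rewrite !index_ins // => -[] E2.
  by rewrite (index_inj 0 x1t x2t E2).
move=> s; apply/idP/allpairsP.
  move=> Hs; have := Hs; rewrite memB => /andP[/andP[G H] P].
  case: s Hs G H P => [|c u] Hs G H P; first by have := perm_size P.
  have Us : uniq (c :: u) by rewrite (perm_uniq P) iota_uniq.
  have nc : c < n by move: H => /= /eqP ->; apply: leq_trans kn; rewrite prednK.
  move: H => /= H.
  have : n \in c :: u by rewrite (perm_mem P) mem_iota add0n ltnSn.
  rewrite in_cons eq_sym (ltn_eqF nc) /= => nu.
  case/splitPr: nu Hs G P Us => u1 u2 Hs G P Us.
  case/lastP: u1 => [|a p] in Hs G P Us *.
    exists (c :: u2, c); split => /=; last by rewrite eqxx.
      apply: (@fromB n k c u2 c) => //=; rewrite ?mem_head -?(eqP H) //=.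
      by rewrite eqxx.
    by rewrite mem_iota add0n (eqP H) prednK // leq0n leqnn.
  have E : c :: rcons a p ++ n :: u2 = ins p n ((c :: a) ++ p :: u2).
    by rewrite ins_split ?cat_rcons //; apply: (@notin_cat _ (n :: u2)); rewrite -cat_rcons.
  have pt : p \in (c :: a) ++ p :: u2 by rewrite mem_cat mem_head orbT.
  have Pt : perm_eq ((c :: a) ++ p :: u2) (iota 0 n) by rewrite -(@perm_ins_iota n p) // -E.
  have pn : p < n by rewrite -(mem_iota_perm _ Pt).
  have pc : p <= c.
    move: G => /=; rewrite cat_rcons => /gt_bad; rewrite pn andbT -leqNgt //.
  exists ((c :: a) ++ p :: u2, p); split => //=.
    apply: (@fromB n k c (a ++ p :: u2) p) => //; last by rewrite -cat_cons -E.
    by rewrite -(eqP H).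
  by rewrite mem_iota add0n leq0n /=; apply: leq_ltn_trans pc _; rewrite (eqP H) prednK.
case=> [[t x] /= [Ht Hx ->]].
have Pt := mB _ Ht.
case: t Ht Pt => [|c u] Ht Pt; first by move: (perm_size Pt); rewrite size_iota => n0; rewrite -n0 leqn0 in kn; rewrite (eqP kn) in k0.
apply: toB => //.
  by rewrite (mem_iota_perm _ Pt); rewrite mem_iota in Hx; apply: leq_trans kn.
by rewrite mem_iota add0n in Hx; rewrite -ltnS prednK.
Qed.

Lemma baseB c : perm_eq (B c.+1 c.+1) (map (cons c) (permutations (iota 0 c))).
Proof.
apply: uniq_perm; first exact: uniqB.
  by rewrite map_inj_uniq ?permutations_uniq // => x y [].
move=> s; rewrite memB; apply/idP/mapP.
  case: s => [|c' u]; first by case/andP => _ /perm_size; rewrite size_iota.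
  move=> /andP[/andP[_ H] P]; move: H; rewrite /= => /eqP E; rewrite E in P.
  exists u; last by rewrite E.
  by rewrite mem_permutations -(perm_cons c) -piotaS.
move=> [u]; rewrite mem_permutations => P ->.
rewrite /Qk /= eqxx andbT piotaS perm_cons P andbT.
apply: gt_all_small; apply/allP => y; rewrite (perm_mem P) mem_iota add0n.
by move=> /andP[_ /ltnW].
Qed.

Lemma sizeB k d : 0 < k -> size (B (k + d) k) = (k.-1)`! * k ^ d.
Proof.
move=> k0; elim: d => [|d IH].
  rewrite addn0 expn0 muln1; case: k k0 => // c _.
  by rewrite (perm_size (baseB c)) size_map size_permutations ?iota_uniq // size_iota.
have hk : 0 < k <= k + d by rewrite k0 leq_addr.
rewrite addnS (perm_size (stepB hk)).
by rewrite size_allpairs IH size_iota expnS (mulnC k) mulnA.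
Qed.

Definition o0 : 'I_3 := @Ordinal 3 0 isT.
Definition o1 : 'I_3 := @Ordinal 3 1 isT.
Definition o2 : 'I_3 := @Ordinal 3 2 isT.

Lemma enum3 : enum 'I_3 = [:: o0; o1; o2].
Proof. by apply: (inj_map val_inj); rewrite val_enum_ord. Qed.

Lemma bvP m (pi : 'S_m.+1) :
  reflect (exists i j : 'I_m.+1, [/\ 0 < i, val j = i.+1, pi ord0 < pi i & pi i < pi j])
          (bv_contains pat123 X02 Y0 pi).
Proof.
apply: (iffP existsP).
  move=> [f /and4P[/forallP Hinc /forallP Hord /forallP HX _]].
  have HX0 := HX (@Ordinal 4 0 isT); have HX2 := HX (@Ordinal 4 2 isT).
  rewrite !inE /= in HX0 HX2.
  rewrite /occ_positions enum3 /= in HX0 HX2.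
  have Ho01 := Hord o0; move/forallP: Ho01 => /(_ o1).
  have Ho12 := Hord o1; move/forallP: Ho12 => /(_ o2).
  have Hi01 := Hinc o0; move/forallP: Hi01 => /(_ o1).
  rewrite !perm1 /= => Hi01 H12 H01.
  have e0 : f o0 = ord0 by apply: val_inj; move/eqP: HX0 => [].
  exists (f o1), (f o2); split.
  - by rewrite e0 in Hi01.
  - by move/eqP: HX2 => [].
  - by rewrite -e0; exact: (esym (eqP H01)).
  - exact: (esym (eqP H12)).
move=> [i [j [i0 ji H0i Hij]]].
have H0j : pi ord0 < pi j by apply: ltn_trans Hij.
exists [ffun a : 'I_3 => if val a == 0 then ord0 else if val a == 1 then i else j].
apply/and4P; split.
- apply/forallP => -[a Ha]; apply/forallP => -[b Hb]; apply/implyP; rewrite !ffunE /=.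
  case: a Ha => [|[|[|a]]] Ha //; case: b Hb => [|[|[|b]]] Hb //= _; by rewrite ?ji.
- apply/forallP => -[a Ha]; apply/forallP => -[b Hb]; rewrite !ffunE !perm1 /=.
  case: a Ha => [|[|[|a]]] Ha //; case: b Hb => [|[|[|b]]] Hb //=;
   by rewrite ?ltnn ?H0i ?Hij ?H0j // ?ltnNge ?(ltnW H0i) ?(ltnW Hij) ?(ltnW H0j).
- apply/forallP => x; apply/implyP; rewrite !inE => /orP[/eqP->|/eqP->];
    by rewrite /occ_positions enum3 /= !ffunE /= ?ji.
- by apply/forallP => y; rewrite inE.
Qed.
From mathcomp Require Import zify.

Lemma gt_nth c t : gt c t =
  ~~ has (fun j => (c < nth 0 t j) && (nth 0 t j < nth 0 t j.+1)) (iota 0 (size t).-1).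
Proof.
elim: t => [|y t IH] //=; case: t IH => [|z t] IH //=.
rewrite -[okp c z t && gt c t]/(gt c (z :: t)) IH /=.
have -> : iota 1 (size t) = map succn (iota 0 (size t)).
  by rewrite (iotaDl 1 0); apply: eq_map => x; rewrite add1n.
by rewrite has_map /preim /= negb_or.
Qed.

Definition Lp n (pi : 'S_n) : seq nat := [seq val (pi i) | i <- enum 'I_n].

Lemma nth_L n (pi : 'S_n) (i : 'I_n) : nth 0 (Lp pi) i = pi i.
Proof. by rewrite /Lp (nth_map i) ?size_enum_ord // nth_ord_enum. Qed.

Lemma size_L n (pi : 'S_n) : size (Lp pi) = n.
Proof. by rewrite size_map size_enum_ord. Qed.

Lemma L_cons m (pi : 'S_m.+1) : Lp pi = val (pi ord0) :: behead (Lp pi).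
Proof. by rewrite /Lp enum_ordSl. Qed.

Lemma avoid_gt m (pi : 'S_m.+1) :
  bv_avoids pat123 X02 Y0 pi = gt (pi ord0) (behead (Lp pi)).
Proof.
rewrite /bv_avoids gt_nth size_behead size_L /=; congr (~~ _).
apply/bvP/hasP.
  move=> [i [j [i0 ji H0 Hij]]]; exists i.-1.
    have hj : i.+1 < m.+1 by rewrite -ji; exact: ltn_ord.
    rewrite mem_iota add0n leq0n /=; lia.
  rewrite !nth_behead prednK // nth_L H0 /= -ji nth_L //.
move=> [p]; rewrite mem_iota add0n leq0n /= => Hp /andP[Ha Hb].
have h1 : p.+1 < m.+1 by lia.
have h2 : p.+2 < m.+1 by lia.
exists (inord p.+1), (inord p.+2); rewrite !inordK //; split => //.
  by rewrite -(nth_L pi (inord p.+1)) inordK // -nth_behead.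
rewrite !nth_behead in Hb.
by rewrite -(nth_L pi (inord p.+1)) -(nth_L pi (inord p.+2)) !inordK.
Qed.

Lemma head_cond n (pi : 'S_n.+1) k : 0 < k ->
  [exists i : 'I_n.+1, (val i == 0) && ((pi i).+1 == k)] = (val (pi ord0) == k.-1).
Proof.
move=> k0; apply/existsP/eqP.
  move=> [i /andP[/eqP i0 /eqP H]]; have -> : ord0 = i by apply: val_inj.
  by rewrite -H.
by move=> H; exists ord0; rewrite eqxx /= H prednK.
Qed.

Lemma L_inj n : injective (@Lp n).
Proof.
move=> p q E; apply/permP => i; apply: val_inj.
by have := congr1 (fun s => nth 0 s i) E; rewrite /= !nth_L.
Qed.

Lemma L_perm n (pi : 'S_n) : perm_eq (Lp pi) (iota 0 n).
Proof.
apply: uniq_perm; last 1 first.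
- move=> y; rewrite mem_iota add0n leq0n /=; apply/mapP/idP => [[i _ ->]|Hy]; first exact: ltn_ord.
  exists (pi^-1 (Ordinal Hy))%g; first by rewrite mem_enum.
  by rewrite permKV.
- by rewrite map_inj_uniq ?enum_uniq // => x y /val_inj /perm_inj.
- exact: iota_uniq.
Qed.

Lemma L_surj m s : perm_eq s (iota 0 m.+1) -> exists pi : 'S_m.+1, Lp pi = s.
Proof.
move=> P.
have Ss : size s = m.+1 by rewrite (perm_size P) size_iota.
have Us : uniq s by rewrite (perm_uniq P) iota_uniq.
have Hs (i : 'I_m.+1) : nth 0 s i < m.+1.
  by rewrite -[_ < _](mem_iota_perm _ P) mem_nth // Ss.
pose f (i : 'I_m.+1) : 'I_m.+1 := inord (nth 0 s i).
have finj : injective f.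
  move=> i j /(congr1 val); rewrite /f /= !inordK ?Hs // => /eqP.
  by rewrite nth_uniq ?Ss // => /eqP /val_inj.
exists (perm finj); apply: (@eq_from_nth _ 0); first by rewrite size_L Ss.
move=> i; rewrite size_L => Hi.
by rewrite -[i]/(val (Ordinal Hi)) nth_L permE /f inordK.
Qed.

Lemma card_count (T : finType) (P : pred T) : #|[set x | P x]| = count P (enum T).
Proof. rewrite cardE {1}/enum_mem size_filter enumT; apply: eq_count => x; by rewrite !inE. Qed.

Lemma card_transfer m k : 0 < k -> a_nk m.+1 k = size (B m.+1 k).
Proof.
move=> k0.
have -> : a_nk m.+1 k = #|[set pi : 'S_m.+1 | Qk k (Lp pi)]|.
  apply: eq_card => pi; rewrite !inE avoid_gt head_cond //.
  have E := L_cons pi; set L := Lp pi in E *; rewrite E /=.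
  by rewrite /Qk /=.
rewrite card_count.
have -> : count (fun pi : 'S_m.+1 => Qk k (Lp pi)) (enum 'S_m.+1)
        = count (Qk k) (map (@Lp m.+1) (enum 'S_m.+1)) by rewrite count_map.
have Hp : perm_eq (map (@Lp m.+1) (enum 'S_m.+1)) (permutations (iota 0 m.+1)).
  apply: uniq_perm; first by rewrite map_inj_uniq ?enum_uniq //; exact: L_inj.
    exact: permutations_uniq.
  move=> s; rewrite mem_permutations; apply/mapP/idP => [[pi _ ->]|Hs].
    exact: L_perm.
  by have [pi Epi] := L_surj Hs; exists pi; rewrite ?mem_enum.
by rewrite (seq.permP Hp) /B size_filter.
Qed.

Theorem mainTheorem11 (n k : nat) : 1 <= n -> 1 <= k <= n ->
  a_nk n k = if k <= n - 2 then (k - 1)`! * k ^ (n - k) else (n - 1)`!.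
Proof.
case: n => [|m] // _ /andP[k0 km].
rewrite card_transfer // -(subnKC km) sizeB // subnKC // subn1.
case: ifP => // Hk.
have [E|E] : (m.+1 - k = 0) \/ (m.+1 - k = 1) by lia.
  have Ek : k = m.+1 by lia.
  by rewrite E expn0 muln1 Ek subn1.
have Ek : k = m by lia.
rewrite E expn1 Ek subn1 /=.
by case: m Ek k0 {E Hk km} => [|m'] Ek k0; [rewrite Ek in k0 | rewrite factS mulnC].
Qed.
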